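(* Let $q$ be a prime power and $T\in\mathbb F_q[X,Y,Z]$ a reduced polynomial satisfying Property (a): $T(a,0,z)=T(0,b,z)=z$ for all $a,b,z\in\mathbb F_q$, and Property (b): $T(x,1,0)=x$ and $T(1,y,0)=y$ for all $x,y\in\mathbb F_q$. Then $$T(X,Y,Z)=Z+XYZ\,M_1(X,Y,Z)+M_2(X,Y),$$ with $M_1(X,Y,Z)=\sum_{i,j,k=0}^{q-2}b_{ijk}X^iY^jZ^k$ and $M_2(X,Y)=\sum_{i=1}^{q-1}\sum_{j=1}^{q-1}c_{ij}X^iY^j$, where for every $1\le j\le q-1$, $$\sum_{i=1}^{q-1}c_{ij}=\sum_{i=1}^{q-1}c_{ji}=\begin{cases}1&\text{if } j=1,\\0&\text{if } j>1.\end{cases}$$ Moreover $T(1,y,z)=y+z+yz\,M_1(1,y,z)$ for all $y,z\in\mathbb F_q$.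
   Context: A polynomial is reduced if its degree in each variable is less than $q$. *)

(* Defs.v *)
From HB Require Import structures.
From mathcomp Require Import all_boot all_order all_algebra all_field.
From mathcomp Require Import mpoly.
Set Implicit Arguments. Unset Strict Implicit. Unset Printing Implicit Defensive.
Import Order.TTheory GRing.Theory.
Local Open Scope ring_scope.

Definition vX (F : fieldType) : {mpoly F[3]} := 'X_(ord0 : 'I_3).
Definition vY (F : fieldType) : {mpoly F[3]} := 'X_(lift ord0 ord0 : 'I_3).
Definition vZ (F : fieldType) : {mpoly F[3]} := 'X_(ord_max : 'I_3).

Definition ev3 (F : fieldType) (x y z : F) : 'I_3 -> F :=
  fun i => nth 0 [:: x; y; z] i.
Definition eval3 (F : fieldType) (P : {mpoly F[3]}) (x y z : F) : F :=
  P.@[ev3 x y z].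

Definition reduced (F : fieldType) (q : nat) (P : {mpoly F[3]}) : Prop :=
  forall m, m \in msupp P -> forall i : 'I_3, (m i < q)%N.

Definition M1poly (F : fieldType) (q : nat) (b : nat -> nat -> nat -> F)
  : {mpoly F[3]} :=
  \sum_(i < q.-1) \sum_(j < q.-1) \sum_(k < q.-1)
     (b i j k)%:MP * (vX F) ^+ i * (vY F) ^+ j * (vZ F) ^+ k.

Definition M2poly (F : fieldType) (q : nat) (c : nat -> nat -> F)
  : {mpoly F[3]} :=
  \sum_(1 <= i < q) \sum_(1 <= j < q) (c i j)%:MP * (vX F) ^+ i * (vY F) ^+ j.

(* Main.v *)
Require Import Defs.
From HB Require Import structures.
From mathcomp Require Import all_boot all_order all_algebra all_field.
From mathcomp Require Import mpoly.
From mathcomp.algebra_tactics Require Import ring.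
Import GRing.Theory.
Local Open Scope ring_scope.


Lemma L1 (F : finFieldType) (g : nat -> F) :
  (forall a : F, \sum_(i < #|F|) g i * a ^+ i = 0) ->
  forall i, (i < #|F|)%N -> g i = 0.
Proof.
move=> H i hi.
pose p : {poly F} := \poly_(i < #|F|) g i.
have p0 : p = 0.
  apply/eqP; apply/negPn/negP => pn0.
  have := max_poly_roots pn0 (rs := enum F).
  rewrite enum_uniq -cardE.
  have -> : all (root p) (enum F).
    by apply/allP => a _; rewrite /root horner_poly H.
  move=> /(_ isT isT); rewrite ltnNge size_poly //.
have := congr1 (fun p : {poly F} => p`_i) p0.
by rewrite coef_poly hi coef0.
Qed.

Lemma L2 (F : finFieldType) (f : nat -> nat -> F) :
  (forall a z : F, \sum_(i < #|F|) \sum_(k < #|F|) f i k * (a ^+ i * z ^+ k) = 0) ->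
  forall i k, (i < #|F|)%N -> (k < #|F|)%N -> f i k = 0.
Proof.
move=> H i k hi hk.
have H1 : forall a : F, \sum_(i < #|F|) f i k * a ^+ i = 0.
  move=> a; have := @L1 F (fun k => \sum_(i < #|F|) f i k * a ^+ i); apply=> //.
  move=> z; rewrite -[RHS](H a z) exchange_big /=.
  apply eq_bigr => k' _; rewrite mulr_suml; apply eq_bigr => i' _.
  by rewrite mulrA.
exact: (@L1 F (fun i => f i k) H1 i hi).
Qed.

Lemma sum_delta (R : nzRingType) (q a : nat) (h : nat -> R) : (a < q)%N ->
  \sum_(i < q) ((i : nat) == a)%:R * h i = h a.
Proof.
move=> ha; rewrite (bigD1 (Ordinal ha)) //= eqxx mul1r big1 ?addr0 //.
move=> i /eqP hi; case: eqP => [e|_]; last by rewrite mul0r.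
by exfalso; apply hi; apply val_inj.
Qed.

Lemma sum_delta2 (R : comNzRingType) (q a b : nat) (h : nat -> nat -> R) :
  (a < q)%N -> (b < q)%N ->
  \sum_(i < q) \sum_(k < q) (((i : nat) == a) && ((k : nat) == b))%:R * h i k = h a b.
Proof.
move=> ha hb.
rewrite -(@sum_delta R q a (fun i => h i b) ha); apply eq_bigr => i _.
rewrite -(@sum_delta R q b (fun k => h i k) hb) mulr_sumr; apply eq_bigr => k _.
by rewrite -mulnb natrM mulrA.
Qed.


Definition mon (i j k : nat) : 'X_{1..3} :=
  [multinom (nth 0%N [:: i; j; k] l) | l < 3].

Lemma mon0 i j k : mon i j k ord0 = i. Proof. by rewrite mnmE. Qed.
Lemma mon1 i j k : mon i j k (lift ord0 ord0) = j. Proof. by rewrite mnmE. Qed.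
Lemma mon2 i j k : mon i j k ord_max = k. Proof. by rewrite mnmE. Qed.

Lemma ord3_cases (l : 'I_3) : l = ord0 \/ l = lift ord0 ord0 \/ l = ord_max.
Proof.
case: l => [[|[|[|//]]] hl].
- by left; apply val_inj.
- by right; left; apply val_inj.
- by right; right; apply val_inj.
Qed.

Lemma mon_m (m : 'X_{1..3}) : m = mon (m ord0) (m (lift ord0 ord0)) (m ord_max).
Proof.
apply/mnmP => l; case: (ord3_cases l) => [->|[->|->]];
  by rewrite ?mon0 ?mon1 ?mon2.
Qed.

Lemma mon_eq i j k a b c :
  (mon i j k == mon a b c) = [&& i == a, j == b & k == c].
Proof.
apply/eqP/and3P => [e|[/eqP-> /eqP-> /eqP->] //].
have := congr1 (fun m : 'X_{1..3} => m ord0) e.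
have := congr1 (fun m : 'X_{1..3} => m (lift ord0 ord0)) e.
have := congr1 (fun m : 'X_{1..3} => m ord_max) e.
by rewrite !mon0 !mon1 !mon2 => -> -> ->.
Qed.

Lemma sum_delta3 (R : comNzRingType) (q a b c : nat) (h : nat -> nat -> nat -> R) :
  (a < q)%N -> (b < q)%N -> (c < q)%N ->
  \sum_(i < q) \sum_(j < q) \sum_(k < q)
     h i j k * ([&& (i : nat) == a, (j : nat) == b & (k : nat) == c])%:R = h a b c.
Proof.
move=> ha hb hc.
rewrite -(@sum_delta R q a (fun i => h i b c) ha); apply eq_bigr => i _.
rewrite -[h i b c](@sum_delta R q b (fun j => h i j c) hb) mulr_sumr.
apply eq_bigr => j _.
rewrite -[h i j c](@sum_delta R q c (fun k => h i j k) hc) !mulr_sumr.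
apply eq_bigr => k _.
case: (i == a :> nat); case: (j == b :> nat); case: (k == c :> nat);
  by rewrite /= ?mul0r ?mulr0 ?mul1r ?mulr1.
Qed.

Lemma XE (F : fieldType) i j k :
  'X_[mon i j k] = vX F ^+ i * vY F ^+ j * vZ F ^+ k.
Proof.
rewrite mpolyXE_id !big_ord_recl big_ord0 mulr1 mulrA.
rewrite /vX /vY /vZ mon0 mon1.
have -> : lift ord0 (lift ord0 (@ord0 0)) = ord_max :> 'I_3 by apply val_inj.
by rewrite mon2.
Qed.

Lemma evalP (F : fieldType) (x y z : F) i j k :
  eval3 (vX F ^+ i * vY F ^+ j * vZ F ^+ k) x y z = x ^+ i * y ^+ j * z ^+ k.
Proof.
rewrite /eval3 !mevalM /vX /vY /vZ !(rmorphXn (meval (ev3 x y z))) /= !mevalXU.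
by [].
Qed.

Lemma expand (F : fieldType) (q : nat) (T : {mpoly F[3]}) : reduced q T ->
  T = \sum_(i < q) \sum_(j < q) \sum_(k < q)
        T@_(mon i j k) *: (vX F ^+ i * vY F ^+ j * vZ F ^+ k).
Proof.
move=> hT; apply/mpolyP => m.
rewrite !raddf_sum /=.
under eq_bigr do rewrite !raddf_sum /=.
under eq_bigr do under eq_bigr do rewrite !raddf_sum /=.
under eq_bigr do under eq_bigr do under eq_bigr do rewrite mcoeffZ -XE mcoeffX.
rewrite [m in LHS]mon_m.
case: (boolP [&& m ord0 < q, m (lift ord0 ord0) < q & m ord_max < q]%N).
- case/and3P => h0 h1 h2.
  rewrite -(@sum_delta3 _ q _ _ _ (fun i j k => T@_(mon i j k)) h0 h1 h2).
  apply eq_bigr => i _; apply eq_bigr => j _; apply eq_bigr => k _.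
  by rewrite [m in mon _ _ _ == m]mon_m mon_eq.
- move=> hn.
  have -> : T@_(mon (m ord0) (m (lift ord0 ord0)) (m ord_max)) = 0.
    rewrite -mon_m; apply/eqP; rewrite mcoeff_eq0; apply/negP => hm.
    by move: hn; rewrite !hT.
  rewrite big1 // => i _; rewrite big1 // => j _; rewrite big1 // => k _.
  rewrite [m in mon _ _ _ == m]mon_m mon_eq.
  case: eqP => [ei|]; last by rewrite mulr0.
  case: eqP => [ej|]; last by rewrite mulr0.
  case: eqP => [ek|]; last by rewrite mulr0.
  by move: hn; rewrite -ei -ej -ek !ltn_ord.
Qed.


Theorem lemma4p7 (F : finFieldType) (T : {mpoly F[3]}) :
  reduced #|F| T ->
  (forall a b z : F, eval3 T a 0 z = z /\ eval3 T 0 b z = z) ->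
  (forall x y : F, eval3 T x 1 0 = x /\ eval3 T 1 y 0 = y) ->
  exists (b : nat -> nat -> nat -> F) (c : nat -> nat -> F),
    T = vZ F + vX F * vY F * vZ F * M1poly #|F| b + M2poly #|F| c /\
    (forall j : nat, (1 <= j <= #|F|.-1)%N ->
       \sum_(1 <= i < #|F|) c i j = (j == 1%N)%:R /\
       \sum_(1 <= i < #|F|) c j i = (j == 1%N)%:R) /\
    (forall y z : F,
       eval3 T 1 y z = y + z + y * z * eval3 (M1poly #|F| b) 1 y z).
Proof.
move=> hT ha hb.
have q2 : (1 < #|F|)%N.
  by apply/card_gt1P; exists 0, 1; rewrite !inE eq_sym oner_neq0.
have q0 : (0 < #|F|)%N by apply: ltnW.
pose t i j k := T@_(mon i j k).
have E := @expand F _ _ hT.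
have ev : forall x y z, eval3 T x y z = \sum_(i < #|F|) \sum_(j < #|F|)
    \sum_(k < #|F|) t i j k * (x ^+ i * y ^+ j * z ^+ k).
  move=> x y z; rewrite /eval3 {1}E !raddf_sum; apply eq_bigr => i _.
  rewrite raddf_sum; apply eq_bigr => j _; rewrite raddf_sum.
  apply eq_bigr => k _; rewrite /= mevalZ; congr (_ * _); exact: evalP.
have ev_a0 : forall a z, eval3 T a 0 z =
    \sum_(i < #|F|) \sum_(k < #|F|) t i 0%N k * (a ^+ i * z ^+ k).
  move=> a z; rewrite ev; apply eq_bigr => i _.
  rewrite (bigD1 (Ordinal q0)) //= [X in _ + X]big1 ?addr0.
    by apply eq_bigr => k _; rewrite expr0 mulr1.
  move=> j hj; apply: big1 => k _; rewrite expr0n.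
  have -> : (j == 0%N :> nat) = false.
    by apply/negP => /eqP e; move/eqP: hj; apply; apply val_inj.
  by rewrite !(mulr0, mul0r).
have ev_0b : forall b z, eval3 T 0 b z =
    \sum_(j < #|F|) \sum_(k < #|F|) t 0%N j k * (b ^+ j * z ^+ k).
  move=> b z; rewrite ev (bigD1 (Ordinal q0)) //= [X in _ + X]big1 ?addr0.
    by apply eq_bigr => j _; apply eq_bigr => k _; rewrite expr0 mul1r.
  move=> i hi; apply: big1 => j _; apply: big1 => k _; rewrite expr0n.
  have -> : (i == 0%N :> nat) = false.
    by apply/negP => /eqP e; move/eqP: hi; apply; apply val_inj.
  by rewrite !(mulr0, mul0r).
have ev_x10 : forall x, eval3 T x 1 0 =
    \sum_(i < #|F|) (\sum_(j < #|F|) t i j 0%N) * x ^+ i.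
  move=> x; rewrite ev; apply eq_bigr => i _; rewrite mulr_suml.
  apply eq_bigr => j _.
  rewrite (bigD1 (Ordinal q0)) //= [X in _ + X]big1 ?addr0.
    by rewrite expr0 expr1n !mulr1.
  move=> k hk; rewrite expr0n.
  have -> : (k == 0%N :> nat) = false.
    by apply/negP => /eqP e; move/eqP: hk; apply; apply val_inj.
  by rewrite !(mulr0, mul0r).
have ev_1y0 : forall y, eval3 T 1 y 0 =
    \sum_(j < #|F|) (\sum_(i < #|F|) t i j 0%N) * y ^+ j.
  move=> y; rewrite ev exchange_big; apply eq_bigr => j _; rewrite mulr_suml.
  apply eq_bigr => i _.
  rewrite (bigD1 (Ordinal q0)) //= [X in _ + X]big1 ?addr0.
    by rewrite expr0 expr1n !mulr1 mul1r.
  move=> k hk; rewrite expr0n.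
  have -> : (k == 0%N :> nat) = false.
    by apply/negP => /eqP e; move/eqP: hk; apply; apply val_inj.
  by rewrite !(mulr0, mul0r).
have tA1 : forall i k, (i < #|F|)%N -> (k < #|F|)%N ->
    t i 0%N k = ((i == 0%N) && (k == 1%N))%:R.
  move=> i k hi hk.
  have Hs : forall a z : F, \sum_(i < #|F|) \sum_(k < #|F|)
      (t i 0%N k - (((i : nat) == 0%N) && ((k : nat) == 1%N))%:R) * (a ^+ i * z ^+ k) = 0.
    move=> a z.
    under eq_bigr do under eq_bigr do rewrite mulrBl.
    under eq_bigr do rewrite sumrB.
    rewrite sumrB -ev_a0 (proj1 (ha a 0 z)).
    rewrite (@sum_delta2 F #|F| 0 1 (fun i k => a ^+ i * z ^+ k)) //.
    by rewrite expr0 mul1r expr1 subrr.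
  move: (@L2 F (fun i k => t i 0%N k - ((i == 0%N) && (k == 1%N))%:R) Hs i k hi hk) => /= /eqP; rewrite subr_eq0 => /eqP //.
have tA2 : forall j k, (j < #|F|)%N -> (k < #|F|)%N ->
    t 0%N j k = ((j == 0%N) && (k == 1%N))%:R.
  move=> j k hj hk.
  have Hs : forall b z : F, \sum_(j < #|F|) \sum_(k < #|F|)
      (t 0%N j k - (((j : nat) == 0%N) && ((k : nat) == 1%N))%:R) * (b ^+ j * z ^+ k) = 0.
    move=> b z.
    under eq_bigr do under eq_bigr do rewrite mulrBl.
    under eq_bigr do rewrite sumrB.
    rewrite sumrB -ev_0b (proj2 (ha 0 b z)).
    rewrite (@sum_delta2 F #|F| 0 1 (fun i k => b ^+ i * z ^+ k)) //.
    by rewrite expr0 mul1r expr1 subrr.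
  move: (@L2 F (fun j k => t 0%N j k - ((j == 0%N) && (k == 1%N))%:R) Hs j k hj hk) => /= /eqP; rewrite subr_eq0 => /eqP //.
have tB1 : forall i, (i < #|F|)%N ->
    \sum_(j < #|F|) t i j 0%N = (i == 1%N)%:R.
  move=> i hi.
  have Hs : forall x : F, \sum_(i < #|F|)
      (\sum_(j < #|F|) t i j 0%N - ((i : nat) == 1%N)%:R) * x ^+ i = 0.
    move=> x.
    under eq_bigr do rewrite mulrBl.
    rewrite sumrB -ev_x10 (proj1 (hb x 0)).
    rewrite (@sum_delta F #|F| 1 (fun i => x ^+ i)) //.
    by rewrite expr1 subrr.
  move: (@L1 F (fun i => \sum_(j < #|F|) t i j 0%N - (i == 1%N)%:R) Hs i hi) => /= /eqP; rewrite subr_eq0 => /eqP //.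
have tB2 : forall j, (j < #|F|)%N ->
    \sum_(i < #|F|) t i j 0%N = (j == 1%N)%:R.
  move=> j hj.
  have Hs : forall y : F, \sum_(j < #|F|)
      (\sum_(i < #|F|) t i j 0%N - ((j : nat) == 1%N)%:R) * y ^+ j = 0.
    move=> y.
    under eq_bigr do rewrite mulrBl.
    rewrite sumrB -ev_1y0 (proj2 (hb 0 y)).
    rewrite (@sum_delta F #|F| 1 (fun i => y ^+ i)) //.
    by rewrite expr1 subrr.
  move: (@L1 F (fun j => \sum_(i < #|F|) t i j 0%N - (j == 1%N)%:R) Hs j hj) => /= /eqP; rewrite subr_eq0 => /eqP //.
have [n hn] : exists n, #|F| = n.+2.
  by exists #|F|.-2; move: q2; case: #|F| => [|[|m]].
pose P i j k := vX F ^+ i * vY F ^+ j * vZ F ^+ k.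
pose b i j k := t i.+1 j.+1 k.+1.
pose c i j := t i j 0%N.
rewrite hn in tA1 tA2 tB1 tB2 E.
have S0 : \sum_(j < n.+2) \sum_(k < n.+2) t 0%N j k *: P 0%N j k = vZ F.
  transitivity (\sum_(j < n.+2) \sum_(k < n.+2)
      (((j : nat) == 0%N) && ((k : nat) == 1%N))%:R * P 0%N j k).
    apply eq_bigr => j _; apply eq_bigr => k _.
    by rewrite tA2 // scaler_nat mulr_natl.
  by rewrite (@sum_delta2 _ n.+2 0 1 (fun j k => P 0%N j k)) // /P !expr0 expr1 !mul1r.
have Si : forall i : nat, (i < n.+1)%N ->
    \sum_(j < n.+2) \sum_(k < n.+2) t i.+1 j k *: P i.+1 j k =
    \sum_(j < n.+1) (c i.+1 j.+1)%:MP * vX F ^+ i.+1 * vY F ^+ j.+1 +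
    vX F * vY F * vZ F * \sum_(j < n.+1) \sum_(k < n.+1)
       (b i j k)%:MP * vX F ^+ i * vY F ^+ j * vZ F ^+ k.
  move=> i hi.
  rewrite big_ord_recl [X in X + _]big1 ?add0r; last first.
    by move=> k _; rewrite tA1 // scale0r.
  rewrite mulr_sumr -big_split /=; apply eq_bigr => j _.
  rewrite big_ord_recl mulr_sumr; congr (_ + _).
    by rewrite /P expr0 mulr1 -mul_mpolyC mulrA.
  apply eq_bigr => k _; rewrite -mul_mpolyC /P /b !exprS /=.
  change (t i.+1 j.+1 k.+1)%:MP_[3] with (t i.+1 j.+1 k.+1)%:MP_[3].
  ring.
have D : T = vZ F + vX F * vY F * vZ F * M1poly #|F| b + M2poly #|F| c.
  rewrite {1}E hn big_ord_recl S0.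
  rewrite (eq_bigr _ (fun (i : 'I_n.+1) _ => Si i (ltn_ord i))) big_split /=.
  rewrite -mulr_sumr -[RHS]addrA; congr (_ + _); rewrite addrC; congr (_ + _).
  rewrite /M2poly big_add1 /= big_mkord; apply eq_bigr => i _.
  by rewrite big_add1 /= big_mkord.
have M2z : forall x y z z' : F,
    eval3 (M2poly #|F| c) x y z = eval3 (M2poly #|F| c) x y z'.
  move=> x y z z'; rewrite /eval3 /M2poly !raddf_sum; apply eq_bigr => i _.
  rewrite !raddf_sum; apply eq_bigr => j _.
  by rewrite /= !mevalM !mevalC /vX /vY !(rmorphXn (meval _)) /= !mevalXU.
have evD : forall x y z : F, eval3 T x y z =
    z + x * y * z * eval3 (M1poly #|F| b) x y z + eval3 (M2poly #|F| c) x y z.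
  move=> x y z; rewrite {1}D /eval3 !mevalD !mevalM /vX /vY /vZ !mevalXU //.
exists b, c; split => //; split.
  move=> j /andP [j1 jn]; rewrite hn in jn *.
  have j0 : (j == 0%N) = false by case: j j1 {jn}.
  rewrite !big_add1 /= !big_mkord; split.
    rewrite -(tB2 j) ?ltnS // [RHS]big_ord_recl tA2 ?j0 ?ltnS // add0r.
    by apply eq_bigr.
  rewrite -(tB1 j) ?ltnS // [RHS]big_ord_recl tA1 ?j0 ?ltnS // add0r.
  by apply eq_bigr.
move=> y z; rewrite evD (M2z 1 y z 0).
have := proj2 (hb 0 y); rewrite evD mulr0 mul0r !add0r => ->.
by rewrite mul1r addrC addrA.
Qed.
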